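(* Let $d\ge 3$. For every positive integer $n$ there is a convex lattice polytope $\mathcal{P}\subseteq\mathbb{R}^d$ (all vertices in $\mathbb{Z}^d$) with at least $n$ vertices such that every point of $\mathcal{P}\cap\mathbb{Z}^d$ lies in a vertex, an edge, or a two-dimensional face of $\mathcal{P}$. *)

(* Defs.v *)
From mathcomp Require Import all_boot all_order all_algebra.
From mathcomp Require Import reals.
Set Implicit Arguments. Unset Strict Implicit. Unset Printing Implicit Defensive.
Import Order.TTheory GRing.Theory Num.Theory.
Local Open Scope ring_scope.

Section Polytopes.
Variables (R : realType) (d : nat).

Definition dotv (x y : 'rV[R]_d) : R := \sum_(i < d) x 0 i * y 0 i.

Definition lattice_pt (x : 'rV[R]_d) : Prop :=
  forall i : 'I_d, exists z : int, x 0 i = z%:~R.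

Definition conv (V : seq 'rV[R]_d) : 'rV[R]_d -> Prop :=
  fun x => exists w : 'I_(size V) -> R,
    (forall i, 0 <= w i) /\ \sum_i w i = 1 /\ x = \sum_i w i *: V`_i.

Definition affdim_le (S : 'rV[R]_d -> Prop) (k : nat) : Prop :=
  exists (p : 'rV[R]_d) (B : 'M[R]_(k, d)),
    forall x, S x -> exists a : 'rV[R]_k, x = p + a *m B.

Definition full_dim (P : 'rV[R]_d -> Prop) : Prop := ~ affdim_le P d.-1.

(* F is a face of the convex set P: intersection of P with a supporting
   hyperplane { x | c.x = b } where c.x <= b on P (c = 0 gives P itself) *)
Definition is_face (P F : 'rV[R]_d -> Prop) : Prop :=
  exists (c : 'rV[R]_d) (b : R),
    (forall x, P x -> dotv c x <= b) /\
    (forall x, F x <-> (P x /\ dotv c x = b)).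

Definition is_vertex (P : 'rV[R]_d -> Prop) (v : 'rV[R]_d) : Prop :=
  P v /\ forall y z (t : R), P y -> P z -> 0 < t < 1 ->
    v = t *: y + (1 - t) *: z -> y = v /\ z = v.

End Polytopes.

(* Main.v *)
Require Import Defs.
From mathcomp Require Import all_boot all_order all_algebra.
From mathcomp Require Import reals.
From mathcomp Require Import ring lra zify.
Import Order.TTheory GRing.Theory Num.Theory.
Local Open Scope ring_scope.

Section Gen.
Variables (R : realType) (d : nat).
Implicit Types (V : seq 'rV[R]_d) (c x y v : 'rV[R]_d).

Lemma conv_coord V (w : 'I_(size V) -> R) j :
  (\sum_i w i *: V`_i) 0 j = \sum_i w i * V`_i 0 j.
Proof. rewrite summxE; apply: eq_bigr => i _; by rewrite mxE. Qed.

Lemma dotv_sum V (w : 'I_(size V) -> R) c :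
  dotv c (\sum_i w i *: V`_i) = \sum_i w i * dotv c V`_i.
Proof.
rewrite /dotv.
under eq_bigr do rewrite conv_coord big_distrr.
rewrite exchange_big /=; apply: eq_bigr => i _.
rewrite big_distrr; apply: eq_bigr => j _ /=; by rewrite mulrCA.
Qed.

Lemma dotvD c x y : dotv c (x + y) = dotv c x + dotv c y.
Proof. rewrite /dotv -big_split; apply: eq_bigr => j _; by rewrite mxE mulrDr. Qed.

Lemma dotvZ c a x : dotv c (a *: x) = a * dotv c x.
Proof. rewrite /dotv big_distrr; apply: eq_bigr => j _ /=; by rewrite mxE mulrCA. Qed.

Lemma dotv0 c : dotv c 0 = 0.
Proof. rewrite /dotv big1 // => j _; by rewrite mxE mulr0. Qed.

Lemma dotv_delta c k : dotv c (delta_mx 0 k) = c 0 k.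
Proof.
rewrite /dotv (bigD1 k) //= mxE !eqxx mulr1 big1 ?addr0 // => j /negbTE H.
by rewrite mxE H andbF mulr0.
Qed.

Lemma dotv_deltaL c k : dotv (delta_mx 0 k) c = c 0 k.
Proof.
rewrite /dotv (bigD1 k) //= mxE !eqxx mul1r big1 ?addr0 // => j /negbTE H.
by rewrite mxE H andbF mul0r.
Qed.

Lemma face_pt V c b v :
  (forall w, w \in V -> dotv c w <= b) ->
  (forall w, w \in V -> dotv c w = b -> w = v) ->
  forall y, conv V y -> dotv c y <= b /\ (dotv c y = b -> y = v).
Proof.
move=> Hle Heq y [w [w0 [w1 ->]]].
have Hi : forall i : 'I_(size V), dotv c V`_i <= b.
  by move=> i; apply: Hle; apply: mem_nth.
have E : b - dotv c (\sum_i w i *: V`_i) = \sum_i w i * (b - dotv c V`_i).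
  rewrite dotv_sum; under [RHS]eq_bigr do rewrite mulrBr.
  by rewrite sumrB -big_distrl /= w1 mul1r.
have Hge : forall i, 0 <= w i * (b - dotv c V`_i).
  by move=> i; rewrite mulr_ge0 // subr_ge0.
split.
  by rewrite -subr_ge0 E sumr_ge0.
move=> Hb.
have Hs : \sum_i w i * (b - dotv c V`_i) = 0 by rewrite -E Hb subrr.
have H0 := psumr_eq0P (fun i _ => Hge i) Hs.
have -> : \sum_i w i *: V`_i = \sum_i w i *: v.
  apply: eq_bigr => i _.
  move: (H0 i isT) => /eqP; rewrite mulf_eq0 subr_eq0 => /orP [/eqP -> | /eqP H].
    by rewrite !scale0r.
  by rewrite (Heq _ (mem_nth _ (ltn_ord i)) (esym H)).
by rewrite -scaler_suml w1 scale1r.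
Qed.

Lemma mem_conv V v : v \in V -> conv V v.
Proof.
move=> Hv; have Hk : (index v V < size V)%N by rewrite index_mem.
pose k := Ordinal Hk.
exists (fun i => (i == k)%:R); split; [by move=> i; rewrite ler0n | split].
  by rewrite (bigD1 k) //= eqxx big1 ?addr0 // => i /negbTE ->.
rewrite (bigD1 k) //= eqxx scale1r big1 ?addr0 ?nth_index // => i /negbTE ->.
by rewrite scale0r.
Qed.

Lemma vertex_of V c b v : v \in V -> dotv c v = b ->
  (forall w, w \in V -> dotv c w <= b) ->
  (forall w, w \in V -> dotv c w = b -> w = v) -> is_vertex (conv V) v.
Proof.
move=> Hv Hb Hle Heq; split; first exact: mem_conv.
move=> y z t Py Pz /andP [t0 t1] E.
have [Ly Ey] := face_pt V c b v Hle Heq _ Py.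
have [Lz Ez] := face_pt V c b v Hle Heq _ Pz.
have Eb : b = t * dotv c y + (1 - t) * dotv c z by rewrite -Hb E dotvD !dotvZ.
move: Ly Lz Eb; set Y := dotv c y; set Z := dotv c z => Ly Lz Eb.
have Hy : Y = b by nra.
have Hz : Z = b by nra.
by split; [apply: Ey | apply: Ez].
Qed.

Lemma conv_ge0 V : (forall w, w \in V -> forall j, 0 <= w 0 j) ->
  forall y, conv V y -> forall j, 0 <= y 0 j.
Proof.
move=> H y [w [w0 [w1 ->]]] j; rewrite conv_coord sumr_ge0 // => i _.
by rewrite mulr_ge0 // H // mem_nth.
Qed.

Lemma full_dim_basis V : (0 < d)%N -> conv V 0 ->
  (forall k, conv V (delta_mx 0 k)) -> full_dim (conv V).
Proof.
move=> d0 H0 Hk [p [B HB]].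
have [a0 Ha0] := HB _ H0.
have /fin_all_exists [a Ha] : forall k : 'I_d,
    exists a : 'rV[R]_(d.-1), delta_mx 0 k = p + a *m B.
  by move=> k; apply: HB.
have Ea0 : a0 *m B = - p by apply/eqP; rewrite -addr_eq0 addrC -Ha0.
have E : (\matrix_(k < d) (a k - a0)) *m B = 1%:M.
  apply/row_matrixP => k; rewrite row_mul rowK row1 mulmxBl Ea0 opprK.
  by rewrite (Ha k) addrC.
have := mxrankM_maxr (\matrix_(k < d) (a k - a0)) B.
rewrite E mxrank1 => H; have := rank_leq_row B; lia.
Qed.

End Gen.

Section Spec.
Variables (R : realType) (m : nat).
Local Notation D := m.+3.

Definition ee (k : 'I_D) : 'rV[R]_D := delta_mx 0 k.
Definition par (i : nat) : 'rV[R]_D :=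
  \row_(j < D) (if nat_of_ord j == 0%N then i%:R else if nat_of_ord j == 1%N then (i * i)%:R else 0).
Definition VV (n : nat) : seq 'rV[R]_D :=
  0 :: map ee (enum 'I_D) ++ map par (iota 3 n).

Lemma VV_cases n w : w \in VV n ->
  w = 0 \/ (exists k, w = ee k) \/ (exists i, (3 <= i)%N /\ w = par i).
Proof.
rewrite inE mem_cat => /orP [/eqP -> | /orP [/mapP [k _ ->] | /mapP [i Hi ->]]].
- by left.
- by right; left; exists k.
- right; right; exists i; split => //; move: Hi; rewrite mem_iota; lia.
Qed.

Lemma ee_in n k : ee k \in VV n.
Proof. by rewrite inE mem_cat map_f ?orbT // mem_enum. Qed.

Lemma par_in n i : (3 <= i < 3 + n)%N -> par i \in VV n.
Proof. by move=> H; rewrite inE mem_cat map_f ?orbT // mem_iota. Qed.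

Lemma zero_in n : (0 : 'rV[R]_D) \in VV n.
Proof. by rewrite inE eqxx. Qed.

Lemma dot2 (c w : 'rV[R]_D) : (forall k : 'I_D, (2 <= k)%N -> c 0 k = 0) ->
  dotv c w = c 0 (inord 0) * w 0 (inord 0) + c 0 (inord 1) * w 0 (inord 1).
Proof.
move=> H.
have E0 : (inord 0 : 'I_D) = ord0 by apply: val_inj; rewrite /= inordK.
have E1 : (inord 1 : 'I_D) = lift ord0 ord0 by apply: val_inj; rewrite /= inordK.
rewrite /dotv; do 2 rewrite big_ord_recl.
rewrite big1 ?addr0 ?E0 ?E1 ?addrA // => i _.
by rewrite H ?mul0r // !lift0.
Qed.


Lemma natlat (k : nat) : exists z : int, (k%:R : R) = z%:~R.
Proof. by exists k; rewrite pmulrn. Qed.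

Lemma par_hi i (j : 'I_D) : (2 <= j)%N -> par i 0 j = 0.
Proof. by rewrite mxE; case: j => [[|[|j]] ?]. Qed.

Lemma par0 i : par i 0 (inord 0) = i%:R.
Proof. by rewrite mxE inordK. Qed.

Lemma par1 i : par i 0 (inord 1) = (i * i)%:R.
Proof. by rewrite mxE inordK. Qed.

Lemma VV_lattice n w : w \in VV n -> lattice_pt w.
Proof.
case/VV_cases => [->|[[k ->]|[i [_ ->]]]] j.
- by rewrite mxE; apply: (natlat 0).
- by rewrite mxE; apply: natlat.
- rewrite mxE; case: ifP => _; [|case: ifP => _]; try apply: natlat.
  exact: (natlat 0).
Qed.

Lemma VV_ge0 n w : w \in VV n -> forall j, 0 <= w 0 j.
Proof.
case/VV_cases => [->|[[k ->]|[i [_ ->]]]] j.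
- by rewrite mxE.
- by rewrite mxE ler0n.
- by rewrite mxE; case: ifP => _; [|case: ifP => _]; rewrite ?ler0n.
Qed.

Lemma face_ee n (j : 'I_D) : (2 <= j)%N ->
  (forall w, w \in VV n -> dotv (ee j) w <= 1) /\
  (forall w, w \in VV n -> dotv (ee j) w = 1 -> w = ee j).
Proof.
move=> Hj; split => w; rewrite /ee dotv_deltaL;
  case/VV_cases => [->|[[k ->]|[i [_ ->]]]].
- by rewrite mxE ler01.
- by rewrite mxE eqxx /=; case: eqP.
- by rewrite par_hi // ler01.
- by rewrite mxE => /eqP; rewrite eq_sym oner_eq0.
- rewrite mxE eqxx /=; case: eqP => [-> //|_] /eqP; by rewrite eq_sym oner_eq0.
- by rewrite par_hi // => /eqP; rewrite eq_sym oner_eq0.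
Qed.

Definition cpar (i : nat) : 'rV[R]_D :=
  \row_(j < D) (if nat_of_ord j == 0%N then (2 * i)%:R else if nat_of_ord j == 1%N then -1 else 0).

Lemma dot_cpar i w : dotv (cpar i) w = (2 * i)%:R * w 0 (inord 0) - w 0 (inord 1).
Proof.
rewrite dot2; last by move=> k; rewrite mxE; case: k => [[|[|k]] ?].
by rewrite !mxE !inordK //= mulN1r.
Qed.

Lemma par_vertex n i : (3 <= i < 3 + n)%N -> is_vertex (conv (VV n)) (par i).
Proof.
move=> Hi; have Hi3 : (3 <= i)%N by lia.
have Hlt : ((2 * i)%:R : R) < (i * i)%:R by rewrite ltr_nat; nia.
have Hpos : (0 : R) < (i * i)%:R by rewrite ltr0n; nia.
have LT : forall w, dotv (cpar i) w < (i * i)%:R ->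
    dotv (cpar i) w <= (i * i)%:R /\ (dotv (cpar i) w = (i * i)%:R -> w = par i).
  move=> w H; split; first exact: ltW.
  by move=> E; move: H; rewrite E ltxx.
have KEY : forall w, w \in VV n ->
    dotv (cpar i) w <= (i * i)%:R /\ (dotv (cpar i) w = (i * i)%:R -> w = par i).
  move=> w; case/VV_cases => [->|[[k ->]|[j [_ ->]]]].
  - by apply: LT; rewrite dotv0.
  - apply: LT; rewrite /ee dotv_delta mxE; case: k => [[|[|k]] Hk] //=.
    by apply: lt_trans Hpos; rewrite ltrN10.
  - rewrite dot_cpar par0 par1 !natrM.
    set I := (i%:R : R); set J := (j%:R : R).
    have Hsq : 0 <= (I - J) ^+ 2 by exact: sqr_ge0.
    split; first by move: Hsq; rewrite expr2; nra.
    move=> E.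
    have Hle0 : (I - J) ^+ 2 <= 0 by rewrite expr2; nra.
    have : (I - J) ^+ 2 = 0 by apply/le_anti; rewrite Hle0 Hsq.
    move/eqP; rewrite expf_eq0 /= subr_eq0 eqr_nat => /eqP ->; done.
apply: (@vertex_of R D (VV n) (cpar i) (i * i)%:R (par i)).
- exact: par_in.
- by rewrite dot_cpar par0 par1 !natrM; ring.
- by move=> w /KEY [].
- by move=> w /KEY [].
Qed.

Definition cG : 'rV[R]_D := \row_(j < D) (if (2 <= j)%N then -1 else 0).

Lemma dot_cG_le n y : conv (VV n) y -> dotv cG y <= 0.
Proof.
move=> Py; rewrite /dotv -oppr_ge0 -sumrN sumr_ge0 // => j _; rewrite mxE.
case: ifP => _; last by rewrite mul0r oppr0.
by rewrite mulN1r opprK (@conv_ge0 R D (VV n) (@VV_ge0 n) _ Py).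
Qed.

Lemma dot_cG_zero n y (j : 'I_D) : conv (VV n) y -> dotv cG y = 0 ->
  (2 <= j)%N -> y 0 j = 0.
Proof.
move=> Py H Hj.
have Hs : \sum_(k < D) - (cG 0 k * y 0 k) = 0 by rewrite sumrN -/(dotv cG y) H oppr0.
have Hge : forall k : 'I_D, true -> 0 <= - (cG 0 k * y 0 k).
  move=> k _; rewrite mxE; case: ifP => _; last by rewrite mul0r oppr0.
  by rewrite mulN1r opprK (@conv_ge0 R D (VV n) (@VV_ge0 n) _ Py).
have := psumr_eq0P Hge Hs (i := j) isT.
by rewrite mxE Hj mulN1r opprK.
Qed.

End Spec.

Theorem theorem11 (R : realType) (d : nat) (hd : (3 <= d)%N)
    (n : nat) (hn : (0 < n)%N) :
  exists V : seq 'rV[R]_d,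
    (forall v, v \in V -> lattice_pt v) /\
    full_dim (conv V) /\
    (exists s : seq 'rV[R]_d,
        uniq s /\ (n <= size s)%N /\ (forall v, v \in s -> is_vertex (conv V) v)) /\
    (forall x, conv V x -> lattice_pt x ->
       exists F, is_face (conv V) F /\ F x /\ affdim_le F 2).
Proof.
case: d hd => [|[|[|m]]] // _.
have G0 := @conv_ge0 R m.+3 (VV R m n) (@VV_ge0 R m n).
exists (VV R m n); split; [|split; [|split]].
- exact: VV_lattice.
- apply: full_dim_basis => //; [apply: mem_conv; exact: zero_in | move=> k; apply: mem_conv; exact: (@ee_in R m n k)].
- exists (map (par R m) (iota 3 n)); split; [|split].
  + rewrite map_inj_in_uniq ?iota_uniq // => i j _ _ E.
    have := congr1 (fun w : 'rV[R]_(m.+3) => w 0 (inord 0)) E.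
    by rewrite /= !par0 => /eqP; rewrite eqr_nat => /eqP.
  + by rewrite size_map size_iota.
  + move=> v /mapP [i Hi ->]; apply: par_vertex; by rewrite mem_iota in Hi.
- move=> x Px Lx.
  case: (boolP [exists j : 'I_(m.+3), (2 <= j)%N && (x 0 j != 0)]).
  + move=> /existsP [j /andP [Hj Hx]].
    have [H1 H2] := @face_ee R m n j Hj.
    have FP := @face_pt R _ _ _ _ _ H1 H2.
    have L1 : x 0 j <= 1 by have := (FP x Px).1; rewrite /ee dotv_deltaL.
    have L0 : 0 <= x 0 j := G0 x Px j.
    have [z Hz] := Lx j.
    have Hx1 : x 0 j = 1.
      have a : (0 <= z)%R by rewrite -(ler0z R) -Hz.
      have b : (z <= 1)%R by rewrite -(ler_int R) -Hz mulr1z.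
      have c : z != 0 by rewrite -(intr_eq0 R) -Hz.
      rewrite Hz; have -> : z = 1 by lia.
      by rewrite mulr1z.
    exists (fun y => conv (VV R m n) y /\ dotv (ee R m j) y = 1); split; [|split].
    * exists (ee R m j), 1; split => // y Py; exact: (FP y Py).1.
    * by split => //; rewrite /ee dotv_deltaL.
    * exists (ee R m j), 0 => y [Py Hy]; exists 0; rewrite mul0mx addr0.
      exact: (FP y Py).2 Hy.
  + move/existsPn => Hall.
    have Hx0 : forall j : 'I_(m.+3), (2 <= j)%N -> x 0 j = 0.
      by move=> j Hj; move: (Hall j); rewrite Hj /= negbK => /eqP.
    exists (fun y => conv (VV R m n) y /\ dotv (cG R m) y = 0); split; [|split].
    * exists (cG R m), 0; split => // y Py; exact: dot_cG_le Py.
    * split => //; rewrite /dotv big1 // => j _; rewrite mxE.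
      by case: ifP => H; [rewrite Hx0 // mulr0 | rewrite mul0r].
    * exists 0, (\matrix_(k < 2, j < m.+3) ((nat_of_ord j == nat_of_ord k)%:R)).
      move=> y [Py Hy]; exists (\row_(k < 2) y 0 (inord k)).
      rewrite add0r; apply/rowP => j; rewrite !mxE.
      do 2 rewrite big_ord_recl.
      rewrite big_ord0 !mxE /= addr0.
      case: j => [[|[|j]] Hj] /=.
      -- rewrite mulr1 mulr0 addr0; congr (y 0 _); apply: val_inj; by rewrite /= inordK.
      -- rewrite mulr1 mulr0 add0r; congr (y 0 _); apply: val_inj; by rewrite /= inordK.
      -- rewrite !mulr0 addr0; by move: (@dot_cG_zero R m n y (Ordinal Hj) Py Hy); apply.
Qed.
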